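(* Let $n\ge 3$ and consider the Majority Model (MM) on the cycle $C_n$ with a coloring $\mathcal{C}$ in which there exist two adjacent nodes with the same color. Then, starting from $\mathcal{C}$, the process reaches a stable coloring after exactly $\lceil l/2\rceil$ rounds, where $l$ is the length of the longest alternating path in the path partition of $\mathcal{C}$.
   Context: A coloring of a graph is a map from its nodes to $\{b,w\}$ (blue/white). In the Majority Model (MM), all nodes update simultaneously in each round: a node adopts the color strictly more frequent among its neighbors in the previous round, and keeps its current color in case of a tie. A coloring is stable if one application of the update rule returns the same coloring. On a cycle, a path is monochromatic if all its nodes have the same color, and alternating if every two adjacent nodes on it have opposite colors; the length of a path is its number of nodes. Path partition: let $B$ (resp. $W$) be the set of nodes lying on maximal blue (resp. white) paths of length at least two in $\mathcal{C}$; the nodes not in $B\cup W$ are partitioned into maximal alternating paths (lying between such monochromatic paths). The path partition consists of these maximal monochromatic paths of length at least two and these maximal alternating paths (take $l=0$ if there are no alternating paths). *)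

(* Defs.v *)
From mathcomp Require Import all_boot.
Set Implicit Arguments. Unset Strict Implicit. Unset Printing Implicit Defensive.

(* Colors: true = blue (b), false = white (w). A coloring is a map T -> bool. *)

Definition mm_step (T : finType) (adj : rel T) (c : T -> bool) : T -> bool :=
  fun x =>
    let nb := #|[pred y | adj x y && c y]| in
    let nw := #|[pred y | adj x y && ~~ c y]| in
    if nw < nb then true else if nb < nw then false else c x.

Definition stable (T : finType) (adj : rel T) (c : T -> bool) : Prop :=
  forall x, mm_step adj c x = c x.

Definition stabilizes_after (T : finType) (adj : rel T) (c : T -> bool)
    (k : nat) : Prop :=
  stable adj (iter k (mm_step adj) c) /\
  forall j, j < k -> ~ stable adj (iter j (mm_step adj) c).

Definition cycle_adj (n : nat) : rel 'I_n :=
  fun u v => (v == ordS u) || (u == ordS v).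

(* u lies on a maximal monochromatic path of length >= 2 (u is in B or W)
   iff u has a neighbour of the same color. *)
Definition in_mono (n : nat) (c : 'I_n -> bool) (u : 'I_n) : bool :=
  [exists v, cycle_adj u v && (c u == c v)].

(* Length of the longest alternating path of the path partition:
   the largest k such that k consecutive nodes i, i+1, ..., i+k-1 (mod n)
   all lie outside B ∪ W (0 if there is none). *)
Definition longest_alt (n : nat) (c : 'I_n -> bool) : nat :=
  \max_(k < n.+1 | [exists i : 'I_n, forall j : 'I_n,
                      (j < k) ==> ~~ in_mono c (iter j (@ordS n) i)]) k.

(* Main.v *)
From mathcomp Require Import all_boot.
From mathcomp Require Import zify.
Require Import Defs.
Set Implicit Arguments. Unset Strict Implicit. Unset Printing Implicit Defensive.
Notation nx u := (@ordS _ u).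
Notation pv u := (@ord_pred _ u).

Lemma iter_val n (i : 'I_n) j : val (iter j (@ordS n) i) = (i + j) %% n.
Proof.
elim: j => [|j IH] /=; first by rewrite addn0 modn_small.
by rewrite IH /= -addn1 modnDml -addnA addn1 addnS.
Qed.

Lemma adj_iff n (u v : 'I_n) : cycle_adj u v = (v == nx u) || (v == pv u).
Proof.
rewrite /cycle_adj; congr (_ || _).
apply/eqP/eqP => [->|->]; by rewrite ?ordSK ?ord_predK.
Qed.

Lemma S_neq_pred n (u : 'I_n) : 2 < n -> nx u != pv u.
Proof.
move=> hn; apply/eqP => h.
have : nx (nx u) = u by rewrite h ord_predK.
move/(congr1 val); rewrite -[nx (nx u)]/(iter 2 (@ordS n) u) iter_val.
move=> h2.
have : (u + 2) %% n == (u + 0) %% n by rewrite h2 addn0 modn_small.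
by rewrite eqn_modDl mod0n modn_small.
Qed.

Lemma in_mono_iff n (c : 'I_n -> bool) u :
  in_mono c u = (c (nx u) == c u) || (c (pv u) == c u).
Proof.
apply/existsP/orP.
- case=> v /andP[]; rewrite adj_iff => /orP[] /eqP-> /eqP ->; by [left|right].
- case=> h.
  + exists (nx u); by rewrite adj_iff eqxx (eqP h) eqxx.
  + exists (pv u); by rewrite adj_iff eqxx orbT (eqP h) eqxx.
Qed.

Lemma card_nb n (P : pred 'I_n) s p : s != p ->
  #|[pred y | ((y == s) || (y == p)) && P y]| = P s + P p.
Proof.
move=> hsp.
rewrite (cardD1 s) (cardD1 p) eq_card0.
  by rewrite !inE !eqxx /= orbT eq_sym hsp addn0.
move=> y; rewrite !inE.
by case: (y == p); case: (y == s); rewrite ?andbF.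
Qed.

Lemma step_eq n (c : 'I_n -> bool) u : 2 < n ->
  mm_step (@cycle_adj n) c u = if in_mono c u then c u else ~~ c u.
Proof.
move=> hn; rewrite /mm_step.
have E : forall Q : pred 'I_n, #|[pred y | cycle_adj u y && Q y]| = Q (nx u) + Q (pv u).
  move=> Q; rewrite -card_nb ?S_neq_pred //; apply: eq_card => y.
  by rewrite !inE adj_iff.
rewrite !E in_mono_iff /=.
by case: (c u); case: (c (nx u)); case: (c (pv u)).
Qed.

Lemma mono_step n (c : 'I_n -> bool) u : 2 < n ->
  in_mono (mm_step (@cycle_adj n) c) u =
  [|| in_mono c (pv u), in_mono c u | in_mono c (nx u)].
Proof.
move=> hn; rewrite !in_mono_iff !step_eq // !in_mono_iff ?ordSK ?ord_predK.
case: (c u); case: (c (nx u)); case: (c (pv u));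
case: (c (nx (nx u))); case: (c (pv (pv u))); by [].
Qed.

Definition runN n (c : 'I_n -> bool) (i : 'I_n) k :=
  forall j, j < k -> ~~ in_mono c (iter j (@ordS n) i).

Lemma cover n (i u : 'I_n) : exists2 j, j < n & iter j (@ordS n) i = u.
Proof.
have hn : 0 < n by case: n i u => [[]|].
exists ((u + n - i) %% n); first by rewrite ltn_mod.
apply: val_inj; rewrite /= iter_val modnDmr.
have -> : i + (u + n - i) = u + n by have := ltn_ord i; lia.
by rewrite modnDr modn_small.
Qed.

Lemma run_lt n (c : 'I_n -> bool) i k :
  (exists u, in_mono c u) -> runN c i k -> k < n.
Proof.
move=> [u hu] hr; rewrite ltnNge; apply/negP => hk.
have [j hj ej] := cover i u.
by move: (hr j (leq_trans hj hk)); rewrite ej hu.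
Qed.

Lemma L_upper n (c : 'I_n -> bool) i k : k <= n -> runN c i k -> k <= longest_alt c.
Proof.
move=> hk hr.
apply: (@bigmax_sup _ (Ordinal (hk : k < n.+1))) => //=.
apply/existsP; exists i; apply/forallP => j; apply/implyP => hj.
exact: hr.
Qed.

Lemma L_witness n (c : 'I_n -> bool) : 0 < n -> exists i, runN c i (longest_alt c).
Proof.
move=> hn.
pose A := [pred k : 'I_n.+1 | [exists i : 'I_n, forall j : 'I_n,
                      (j < k) ==> ~~ in_mono c (iter j (@ordS n) i)]].
have hA : 0 < #|A|.
  apply/card_gt0P; exists ord0; rewrite inE; apply/existsP; exists (Ordinal hn).
  by apply/forallP.
have [k hk] := @eq_bigmax_cond _ A id hA.
rewrite /longest_alt => ->.
move: hk; rewrite inE => /existsP[i /forallP hi]; exists i => j hj.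
have hjn : j < n by apply: leq_trans hj _; rewrite -ltnS.
by move/implyP: (hi (Ordinal hjn)); apply.
Qed.

Lemma L_le n (c : 'I_n -> bool) : longest_alt c <= n.
Proof. by apply/bigmax_leqP => k _; rewrite -ltnS. Qed.

Lemma stable_iff n (c : 'I_n -> bool) : 2 < n ->
  stable (@cycle_adj n) c <-> longest_alt c = 0.
Proof.
move=> hn; have hn0 : 0 < n by apply: leq_trans hn.
split => [hs | hL].
- have [i hi] := L_witness c hn0.
  case E : (longest_alt c) => [//|L].
  have := hi 0; rewrite E => /(_ isT) /=.
  by have := hs i; rewrite step_eq //; case: (in_mono c i) => //; case: (c i).
- move=> x; rewrite step_eq //; case hx: (in_mono c x) => //.
  have : 1 <= longest_alt c.
    apply: (@L_upper _ _ x) => // j; rewrite ltnS leqn0 => /eqP -> /=.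
    by rewrite hx.
  by rewrite hL.
Qed.

Lemma L_step n (c : 'I_n -> bool) : 2 < n -> (exists u, in_mono c u) ->
  longest_alt (mm_step (@cycle_adj n) c) = longest_alt c - 2.
Proof.
move=> hn hm; have hn0 : 0 < n by apply: leq_trans hn.
set c' := mm_step _ c.
have hm' : exists u, in_mono c' u.
  by case: hm => u hu; exists u; rewrite /c' mono_step // hu orbT.
apply/eqP; rewrite eqn_leq; apply/andP; split.
- have [i hi] := L_witness c' hn0.
  case E : (longest_alt c') => [//|k].
  rewrite E in hi.
  have H3 : forall j, j < k.+1 -> [&& ~~ in_mono c (pv (iter j (@ordS n) i)),
        ~~ in_mono c (iter j (@ordS n) i) & ~~ in_mono c (nx (iter j (@ordS n) i))].
    by move=> j hj; have := hi j hj; rewrite /c' mono_step // !negb_or.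
  have hr : runN c (pv i) k.+3.
    case=> [_|j hj] /=.
      by case/and3P: (H3 0 isT).
    rewrite -iterS iterSr ord_predK.
    case: (ltngtP j k.+1) => hjk.
    + by case/and3P: (H3 j hjk).
    + lia.
    + rewrite hjk iterS; by case/and3P: (H3 k (ltnSn k)).
  have := run_lt hm hr.
  move=> hlt; have := L_upper (ltnW hlt) hr; lia.
- have [i hi] := L_witness c hn0.
  apply: (@L_upper _ _ (nx i)); first by have := L_le c; lia.
  move=> j hj.
  rewrite /c' mono_step // !negb_or.
  have e1 : pv (iter j (@ordS n) (nx i)) = iter j (@ordS n) i by rewrite -iterSr iterS ordSK.
  have e2 : iter j (@ordS n) (nx i) = iter j.+1 (@ordS n) i by rewrite iterSr.
  have e3 : nx (iter j (@ordS n) (nx i)) = iter j.+2 (@ordS n) i by rewrite e2.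
  rewrite e1 e3 e2 !hi //; lia.
Qed.

Theorem lemma2p2 (n : nat) (hn : 3 <= n) (c : 'I_n -> bool)
  (hmono : exists u v : 'I_n, cycle_adj u v /\ c u = c v) :
  stabilizes_after (@cycle_adj n) c (uphalf (longest_alt c)).
Proof.
have hm : exists u, in_mono c u.
  by case: hmono => u [v [h1 h2]]; exists u; apply/existsP; exists v; rewrite h1 h2 eqxx.
set L := longest_alt c.
have key : forall m, (exists u, in_mono (iter m (mm_step (@cycle_adj n)) c) u) /\
    longest_alt (iter m (mm_step (@cycle_adj n)) c) = L - m.*2.
  elim=> [|m [IH1 IH2]]; first by rewrite subn0.
  split.
    by case: IH1 => u hu; exists u; rewrite iterS mono_step // hu orbT.
  by rewrite iterS L_step // IH2 doubleS; lia.
split.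
- apply/stable_iff => //; rewrite (proj2 (key _)).
  by apply/eqP; rewrite subn_eq0 -leq_uphalf_double.
- move=> j hj; rewrite stable_iff // (proj2 (key _)).
  move: hj; rewrite gtn_uphalf_double; lia.
Qed.
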